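(* In an Ehresmann semigroup $S$, we have ${\le_l}\circ{\le_r}={\le_r}\circ{\le_l}$ (as composites of binary relations on $S$).
   Context: A DRC-semigroup is $(S,\cdot,D,R)$, $(S,\cdot)$ a semigroup, $D,R:S\to S$ with, for all $a,b$: $D(a)a=a$, $aR(a)=a$; $D(ab)=D(aD(b))$, $R(ab)=R(R(a)b)$; $D(ab)=D(a)D(ab)D(a)$, $R(ab)=R(b)R(ab)R(b)$; $R(D(a))=D(a)$, $D(R(a))=R(a)$. An Ehresmann semigroup is a DRC-semigroup additionally satisfying $D(a)D(b)=D(b)D(a)$ and $R(a)R(b)=R(b)R(a)$ for all $a,b$. Projections $\mathbf P(S)=\{D(a):a\in S\}$ are ordered by $p\le q\iff p=pq=qp$. On $S$ define $a\le_l b\iff a=pb$ for some $p\in\mathbf P(S)$ with $p\le D(b)$, and $a\le_r b\iff a=bq$ for some $q\in\mathbf P(S)$ with $q\le R(b)$. *)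

(* Defs.v *)
Record DRC_semigroup (S : Type) (mul : S -> S -> S) (D R : S -> S) : Prop := {
  drc_assoc : forall a b c, mul a (mul b c) = mul (mul a b) c;
  drc_D_left : forall a, mul (D a) a = a;
  drc_R_right : forall a, mul a (R a) = a;
  drc_D_cong : forall a b, D (mul a b) = D (mul a (D b));
  drc_R_cong : forall a b, R (mul a b) = R (mul (R a) b);
  drc_D_sand : forall a b, D (mul a b) = mul (mul (D a) (D (mul a b))) (D a);
  drc_R_sand : forall a b, R (mul a b) = mul (mul (R b) (R (mul a b))) (R b);
  drc_RD : forall a, R (D a) = D a;
  drc_DR : forall a, D (R a) = R a
}.

Record Ehresmann_semigroup (S : Type) (mul : S -> S -> S) (D R : S -> S) : Prop := {
  eh_drc : DRC_semigroup S mul D R;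
  eh_D_comm : forall a b, mul (D a) (D b) = mul (D b) (D a);
  eh_R_comm : forall a b, mul (R a) (R b) = mul (R b) (R a)
}.

(* Projections P(S) = { D a : a in S }. *)
Definition is_projection {S : Type} (D : S -> S) (p : S) : Prop :=
  exists a, p = D a.

Definition proj_le {S : Type} (mul : S -> S -> S) (p q : S) : Prop :=
  p = mul p q /\ p = mul q p.

Definition le_l {S : Type} (mul : S -> S -> S) (D : S -> S) (a b : S) : Prop :=
  exists p, is_projection D p /\ proj_le mul p (D b) /\ a = mul p b.

Definition le_r {S : Type} (mul : S -> S -> S) (D R : S -> S) (a b : S) : Prop :=
  exists q, is_projection D q /\ proj_le mul q (R b) /\ a = mul b q.

Definition rel_comp {S : Type} (r1 r2 : S -> S -> Prop) (a c : S) : Prop :=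
  exists b, r1 a b /\ r2 b c.

(* Main.v *)
Require Import Defs.
From Stdlib Require Import Setoid.

Lemma DD S mul D R (HS : Ehresmann_semigroup S mul D R) a : D (D a) = D a.
Proof. destruct HS as [H _ _]. rewrite <- (drc_RD _ _ _ _ H a) at 1. rewrite (drc_DR _ _ _ _ H). apply (drc_RD _ _ _ _ H). Qed.

Lemma Didem S mul D R (HS : Ehresmann_semigroup S mul D R) a : mul (D a) (D a) = D a.
Proof. pose proof (DD _ _ _ _ HS a) as E. destruct HS as [H _ _].
  rewrite <- E at 1. apply (drc_D_left _ _ _ _ H). Qed.

Lemma Dprod S mul D R (HS : Ehresmann_semigroup S mul D R) x y :
  D (mul (D x) (D y)) = mul (D x) (D y).
Proof.
  pose proof (DD _ _ _ _ HS) as DD'. pose proof (Didem _ _ _ _ HS) as Id.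
  destruct HS as [H Hc _].
  assert (E1 : D (mul (D x) (D y)) = mul (D (mul (D x) (D y))) (D x)).
  { rewrite (drc_D_sand _ _ _ _ H (D x) (D y)) at 1. rewrite DD'.
    rewrite (Hc x (mul (D x) (D y))), <- (drc_assoc _ _ _ _ H), Id.
    reflexivity. }
  assert (E2 : D (mul (D x) (D y)) = mul (D (mul (D x) (D y))) (D y)).
  { rewrite (Hc x y).
    rewrite (drc_D_sand _ _ _ _ H (D y) (D x)) at 1. rewrite DD'.
    rewrite (Hc y (mul (D y) (D x))), <- (drc_assoc _ _ _ _ H), Id.
    reflexivity. }
  rewrite E1 at 1. rewrite E2 at 1.
  rewrite <- (drc_assoc _ _ _ _ H). rewrite (Hc y x). apply (drc_D_left _ _ _ _ H).
Qed.

Lemma RisD S mul D R (HS : Ehresmann_semigroup S mul D R) a : R a = D (R a).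
Proof. destruct HS as [H _ _]. symmetry. apply (drc_DR _ _ _ _ H). Qed.

Lemma Dle S mul D R (HS : Ehresmann_semigroup S mul D R) x y :
  proj_le mul (D (mul x y)) (D x).
Proof.
  pose proof (Didem _ _ _ _ HS) as Id. destruct HS as [H Hc _].
  pose proof (drc_D_sand _ _ _ _ H x y) as E.
  assert (E' : D (mul x y) = mul (D x) (D (mul x y))).
  { rewrite E at 1. rewrite Hc. rewrite <- (drc_assoc _ _ _ _ H), Id. reflexivity. }
  split.
  - rewrite Hc. exact E'.
  - exact E'.
Qed.

Lemma Rle S mul D R (HS : Ehresmann_semigroup S mul D R) x y :
  proj_le mul (R (mul x y)) (R y).
Proof.
  pose proof (Didem _ _ _ _ HS) as Id. pose proof (RisD _ _ _ _ HS) as RD.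
  destruct HS as [H Hc Hr].
  pose proof (drc_R_sand _ _ _ _ H x y) as E.
  assert (E' : R (mul x y) = mul (R y) (R (mul x y))).
  { rewrite E at 1. rewrite Hr. rewrite <- (drc_assoc _ _ _ _ H).
    rewrite (RD y), Id, <- (RD y). reflexivity. }
  split.
  - rewrite Hr. exact E'.
  - exact E'.
Qed.

Lemma le_trans S mul D R (HS : Ehresmann_semigroup S mul D R) p q r :
  proj_le mul p q -> proj_le mul q r -> proj_le mul p r.
Proof.
  destruct HS as [H _ _]. intros [h1 h2] [k1 k2]. split.
  - rewrite h1 at 1. rewrite k1 at 1. rewrite (drc_assoc _ _ _ _ H), <- h1. reflexivity.
  - rewrite h2 at 1. rewrite k2 at 1. rewrite <- (drc_assoc _ _ _ _ H), <- h2. reflexivity.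
Qed.

Theorem proposition10p3 (S : Type) (mul : S -> S -> S) (D R : S -> S)
  (HS : Ehresmann_semigroup S mul D R) :
  forall a c : S,
    rel_comp (le_l mul D) (le_r mul D R) a c <->
    rel_comp (le_r mul D R) (le_l mul D) a c.
Proof.
  pose proof (Didem _ _ _ _ HS) as Id. pose proof (RisD _ _ _ _ HS) as RD.
  pose proof (Dprod _ _ _ _ HS) as DP.
  pose proof (Dle _ _ _ _ HS) as DL. pose proof (Rle _ _ _ _ HS) as RL.
  pose proof (le_trans _ _ _ _ HS) as LT.
  destruct HS as [H Hc Hr].
  pose proof (drc_assoc _ _ _ _ H) as A.
  intros a c; split.
  - intros [b [[p [[x ->] [Hp ->]]] [q [[y ->] [Hq ->]]]]].
    assert (Hp' : proj_le mul (D x) (D c)) by (eapply LT; [exact Hp | apply DL]).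
    exists (mul (D x) c). split.
    + exists (mul (D y) (R (mul (D x) c))). split; [|split].
      * exists (mul (D y) (R (mul (D x) c))). rewrite (RD (mul (D x) c)). symmetry; apply DP.
      * rewrite (RD (mul (D x) c)). split.
        -- rewrite <- A. rewrite (Id (R (mul (D x) c))). reflexivity.
        -- rewrite A, (Hc (R (mul (D x) c)) y), <- A, (Id (R (mul (D x) c))). reflexivity.
      * rewrite (RD (mul (D x) c)). rewrite (Hc y (R (mul (D x) c))).
        rewrite (A (mul (D x) c)), <- (RD (mul (D x) c)).
        rewrite (drc_R_right _ _ _ _ H). rewrite A. reflexivity.
    + exists (D x). split; [exists x; reflexivity | split; [exact Hp' | reflexivity]].
  - intros [b [[q [[y ->] [Hq ->]]] [p [[x ->] [Hp ->]]]]].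
    assert (Hq' : proj_le mul (D y) (R c)) by (eapply LT; [exact Hq | apply RL]).
    exists (mul c (D y)). split.
    + exists (mul (D x) (D (mul c (D y)))). split; [|split].
      * exists (mul (D x) (D (mul c (D y)))). symmetry; apply DP.
      * split.
        -- rewrite <- A, (Id (mul c (D y))). reflexivity.
        -- rewrite A, (Hc (mul c (D y)) x), <- A, (Id (mul c (D y))). reflexivity.
      * rewrite <- (A (D x) (D (mul c (D y)))), (drc_D_left _ _ _ _ H), A. reflexivity.
    + exists (D y). split; [exists y; reflexivity | split; [exact Hq' | reflexivity]].
Qed.
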